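(* For every integer $n\ge 2$ and every real number $p\in(0,1)$, \[ (n-2)\bigl(n^p-(n-1)^p\bigr)^{1/(1-p)}+1\le (n-1)^{p/(1-p)}. \] *)

(* Defs.v *)
From Stdlib Require Import Reals.

(* Main.v *)
Require Import Defs.
From Stdlib Require Import Reals Lra.
Open Scope R_scope.

Lemma exple x y : x <= y -> exp x <= exp y.
Proof. intros [H|H]; [left; now apply exp_increasing | subst; lra]. Qed.

Lemma expge x : 1 + x <= exp x.
Proof. destruct (Req_dec x 0) as [->|H]; [rewrite exp_0; lra | left; now apply exp_ineq1]. Qed.

Lemma lnle x y : 0 < x -> x <= y -> ln x <= ln y.
Proof. intros H [H1|H1]; [left; now apply ln_increasing | subst; lra]. Qed.

Theorem lemma5 (n : nat) (p : R) (hn : (2 <= n)%nat) (hp0 : 0 < p) (hp1 : p < 1) :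
  (INR n - 2) * Rpower (Rpower (INR n) p - Rpower (INR n - 1) p) (1 / (1 - p)) + 1
    <= Rpower (INR n - 1) (p / (1 - p)).
Proof.
  assert (Hn : 2 <= INR n) by (apply (le_INR 2) in hn; simpl in hn; lra).
  set (m := INR n - 1).
  replace (INR n) with (m + 1) by (unfold m; ring).
  replace (m + 1 - 2) with (m - 1) by ring.
  assert (Hm : 1 <= m) by (unfold m; lra).
  clearbody m.
  set (L := ln m).
  assert (HL0 : 0 <= L) by (unfold L; rewrite <- ln_1; apply lnle; lra).
  assert (HemL : exp (- L) = / m) by (unfold L; rewrite exp_Ropp, exp_ln; lra).
  assert (HL1 : 1 - / m <= L) by (pose proof (expge (- L)); lra).
  destruct (MVT_cor2 (fun x => Rpower x p) (fun x => p * Rpower x (p - 1)) m (m + 1))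
    as [c [Hc Hcm]]; [lra | intros c Hc; apply derivable_pt_lim_power; lra |].
  set (d := Rpower (m + 1) p - Rpower m p) in *.
  replace (m + 1 - m) with 1 in Hc by ring.
  rewrite Rmult_1_r in Hc.
  assert (Hcd : Rpower c (p - 1) <= exp ((p - 1) * L)).
  { unfold Rpower, L. apply exple. apply Rmult_le_compat_neg_l; [lra|].
    apply lnle; lra. }
  assert (Hd0 : 0 < d) by (rewrite Hc; unfold Rpower; pose proof (exp_pos ((p-1) * ln c)); nra).
  assert (Hdle : ln d <= ln p + (p - 1) * L).
  { rewrite <- (ln_exp ((p - 1) * L)), <- ln_mult; [| lra | apply exp_pos].
    apply lnle; [lra|]. rewrite Hc. apply Rmult_le_compat_l; lra. }
  assert (Hlnp : ln p < 0) by (rewrite <- ln_1; apply ln_increasing; lra).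
  assert (HT : Rpower d (1 / (1 - p)) <= p * / m).
  { unfold Rpower. rewrite <- HemL. replace (p * exp (- L)) with (exp (ln p + - L)) by (rewrite exp_plus, exp_ln; lra).
    apply exple.
    assert (H1 : 1 / (1 - p) * ln d <= 1 / (1 - p) * (ln p + (p - 1) * L)).
    { apply Rmult_le_compat_l; [|lra]. left; apply Rdiv_lt_0_compat; lra. }
    assert (H2 : 1 / (1 - p) * (ln p + (p - 1) * L) = ln p / (1 - p) - L)
      by (field; lra).
    assert (H3 : ln p / (1 - p) <= ln p).
    { apply (Rmult_le_reg_r (1 - p)); [lra|]. unfold Rdiv. rewrite Rmult_assoc, Rinv_l; nra. }
    lra. }
  assert (HR : 1 + p / (1 - p) * L <= Rpower m (p / (1 - p))) by (unfold Rpower; apply expge).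
  assert (Hq : p <= p / (1 - p)).
  { apply (Rmult_le_reg_r (1 - p)); [lra|]. unfold Rdiv. rewrite Rmult_assoc, Rinv_l; nra. }
  assert (Hm1 : (m - 1) * / m = 1 - / m) by (field; lra).
  assert (HT0 : 0 <= Rpower d (1 / (1 - p))) by (unfold Rpower; left; apply exp_pos).
  assert (Hiv : 0 < / m) by (apply Rinv_0_lt_compat; lra).
  assert ((m - 1) * Rpower d (1 / (1 - p)) <= p * (1 - / m)).
  { rewrite <- Hm1. replace (p * ((m - 1) * / m)) with ((m - 1) * (p * / m)) by ring.
    apply Rmult_le_compat_l; lra. }
  assert (p * (1 - / m) <= p / (1 - p) * L).
  { apply Rmult_le_compat; try lra. assert (/ m <= 1) by (rewrite <- Rinv_1; apply Rinv_le_contravar; lra). lra. }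
  lra.
Qed.
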